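(* Let $L$ be a finite distributive lattice and let $K$ be a cutting of $L$. For every $k\ge0$, $$q_k(L\boxplus K)=q_k(L)+q_k(K)+q_{k-1}(K).$$ In particular, $|L\boxplus K|=|L|+|K|$.
   Context: For a finite poset $P$, $\mathcal{F}(P)$ is the set of filters (up-sets) of $P$ ordered by reverse inclusion; every finite distributive lattice is isomorphic to some $\mathcal{F}(P)$. A cutting of a finite distributive lattice $L$ is an interval $K=[\hat0_K,\hat1_K]$ of $L$ such that every maximal chain of $L$ meets $K$. For a cutting $K$ of $L=\mathcal{F}(P)$, let $S=\hat0_K\setminus\hat1_K$, $S_0$ the set of maximal elements of $P\setminus\hat0_K$, $S_1$ the set of minimal elements of $\hat1_K$. The poset $P_K$ is $P\cup\{x_K\}$ ($x_K$ new) where the order on $P$ is unchanged, $z<x_K$ iff $z\le s$ for some $s\in S_0$, $x_K<y$ iff $y\ge s$ for some $s\in S_1$, and $x_K$ is incomparable to every element of $S$. The convex expansion is $L\boxplus K:=\mathcal{F}(P_K)$. For a finite lattice $M$ and $k\ge0$, $q_k(M)$ is the number of convex sublattices (intervals) of $M$ isomorphic to the Boolean lattice $\mathbf{B}_k$ with $2^k$ elements (so $q_0(M)=|M|$), and $q_{-1}(M)=0$. *)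

(* Defs.v *)
From mathcomp Require Import all_boot.
Set Implicit Arguments. Unset Strict Implicit. Unset Printing Implicit Defensive.

(* A finite poset is a finType T with a relation le (partial order assumed in
   the theorem).  Filters (up-sets) of a relation: *)
Definition upclosed (T : finType) (le : rel T) (A : {set T}) : bool :=
  [forall x, forall y, (x \in A) && le x y ==> (y \in A)].

(* F(P): the set of filters; ordered by reverse inclusion. *)
Definition filters (T : finType) (le : rel T) : {set {set T}} :=
  [set A : {set T} | upclosed le A].

Definition revsub (T : finType) : rel {set T} := fun A B => B \subset A.

Definition bool_interval (T : finType) (M : {set T}) (le : rel T) (k : nat)
  (x y : T) : bool :=
  [exists f : {ffun {set 'I_k} -> T},
     [forall A : {set 'I_k}, forall B : {set 'I_k}, (A \subset B) == le (f A) (f B)] &&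
     [forall z, ((z \in M) && le x z && le z y) == (z \in codom f)]].

Definition qk (T : finType) (M : {set T}) (le : rel T) (k : nat) : nat :=
  #|[set p : T * T | [&& p.1 \in M, p.2 \in M, le p.1 p.2 &
                        bool_interval M le k p.1 p.2]]|.

(* q_{k-1} with the convention q_{-1} = 0 (argument is k). *)
Definition qk_pred (T : finType) (M : {set T}) (le : rel T) (k : nat) : nat :=
  if k is k'.+1 then qk M le k' else 0.

(* The interval K = [a0, a1] of L = F(P) (a0 <= a1 in L, i.e. a1 \subset a0). *)
Definition cut_interval (T : finType) (le : rel T) (a0 a1 : {set T})
  : {set {set T}} :=
  [set A in filters le | (a1 \subset A) && (A \subset a0)].

Definition is_chain (T : finType) (le : rel T) (C : {set {set T}}) : Prop :=
  C \subset filters le /\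
  forall A B, A \in C -> B \in C -> (A \subset B) || (B \subset A).

Definition is_max_chain (T : finType) (le : rel T) (C : {set {set T}}) : Prop :=
  is_chain le C /\ forall D, is_chain le D -> C \subset D -> D = C.

Definition cutting (T : finType) (le : rel T) (a0 a1 : {set T}) : Prop :=
  [/\ a0 \in filters le, a1 \in filters le, a1 \subset a0 &
      forall C, is_max_chain le C ->
        exists A, A \in C /\ A \in cut_interval le a0 a1].

Definition S0 (T : finType) (le : rel T) (a0 : {set T}) : {set T} :=
  [set s | (s \notin a0) && [forall t, (t \notin a0) && le s t ==> (t == s)]].
Definition S1 (T : finType) (le : rel T) (a1 : {set T}) : {set T} :=
  [set s | (s \in a1) && [forall t, (t \in a1) && le t s ==> (t == s)]].

(* The poset P_K on option T, None playing the role of the new element x_K. *)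
Definition leK (T : finType) (le : rel T) (a0 a1 : {set T}) : rel (option T) :=
  fun u v =>
    match u, v with
    | Some a, Some b => le a b
    | Some z, None => [exists s in S0 le a0, le z s]
    | None, Some y => [exists s in S1 le a1, le s y]
    | None, None => true
    end.

(* L ⊞ K = F(P_K) (ordered by reverse inclusion). *)
Definition convex_expansion (T : finType) (le : rel T) (a0 a1 : {set T})
  : {set {set option T}} := filters (leK le a0 a1).

(* Main.v *)
Require Import Defs.
From mathcomp Require Import all_boot.
Set Implicit Arguments. Unset Strict Implicit. Unset Printing Implicit Defensive.

Definition anti (T : finType) (le : rel T) (X : {set T}) : bool :=
  [forall x in X, forall y in X, le x y ==> (x == y)].

Lemma antiP (T : finType) (le : rel T) (X : {set T}) :
  reflect (forall x y, x \in X -> y \in X -> le x y -> x = y) (anti le X).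
Proof.
apply: (iffP forallP) => H.
- move=> x y xX yX lxy; move: (H x); rewrite xX /= => /forallP/(_ y).
  by rewrite yX lxy /= => /eqP.
- move=> x; apply/implyP=> xX; apply/forall_inP=> y yX; apply/implyP=> lxy.
  by apply/eqP; exact: H.
Qed.

Lemma filtersP (T : finType) (le : rel T) (A : {set T}) :
  reflect (forall x y, x \in A -> le x y -> y \in A) (A \in filters le).
Proof.
rewrite inE /upclosed; apply: (iffP forallP) => H.
- move=> x y xA lxy; move: (H x) => /forallP/(_ y)/implyP; apply.
  by rewrite xA lxy.
- move=> x; apply/forallP=> y; apply/implyP=> /andP[xA lxy]; exact: H lxy.
Qed.

Lemma bi_of_anti (T : finType) (le : rel T) (F1 F2 : {set T}) k :
  F1 \in filters le -> F2 \in filters le -> F2 \subset F1 ->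
  anti le (F1 :\: F2) -> #|F1 :\: F2| = k ->
  bool_interval (filters le) (@revsub T) k F1 F2.
Proof.
move=> /filtersP fF1 /filtersP fF2 s21 /antiP an <-.
set D := F1 :\: F2.
pose e : 'I_#|D| -> T := enum_val.
have eD : forall i, e i \in D by move=> i; exact: enum_valP.
have einj : injective e by exact: enum_val_inj.
have eF1 : forall A : {set 'I_#|D|}, e @: A \subset F1.
  by move=> A; apply/subsetP=> x /imsetP[i _ ->]; move: (eD i); rewrite inE => /andP[].
apply/existsP; exists [ffun A : {set 'I_#|D|} => F1 :\: (e @: A)].
apply/andP; split.
- apply/forallP=> A; apply/forallP=> B; rewrite /revsub !ffunE.
  apply/eqP; apply/idP/idP.
  + by move=> sAB; apply: setDS; exact: imsetS.
  + move=> sBA; apply/subsetP=> i iA.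
    have : e i \in e @: B.
      apply/negPn/negP=> nB.
      have : e i \in F1 :\: e @: B by rewrite inE nB (subsetP (eF1 A)) // imset_f.
      by move/(subsetP sBA); rewrite inE imset_f.
    by rewrite mem_imset.
- apply/forallP=> z; rewrite /revsub; apply/eqP; apply/idP/idP.
  + move=> /andP[/andP[/filtersP fz zF1] F2z].
    apply/codomP.
    exists [set i | e i \notin z]; rewrite ffunE.
    apply/setP=> x; rewrite in_setD.
    case xz: (x \in z).
    * rewrite (subsetP zF1) // andbT; apply/esym/negP=> /imsetP[i]; rewrite inE.
      by move=> + exi; rewrite -exi xz.
    * apply/esym; case xF1: (x \in F1); rewrite ?andbF // andbT.
      have xD : x \in D by rewrite inE xF1 andbT; apply/negP=> /(subsetP F2z); rewrite xz.
      apply/negPn; apply/imsetP; exists (enum_rank_in xD x).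
        by rewrite inE /e (enum_rankK_in xD xD) xz.
      by rewrite /e (enum_rankK_in xD xD).
  + move=> /codomP[A ->]; rewrite ffunE.
    apply/andP; split; first (apply/andP; split).
    * apply/filtersP=> x y; rewrite !inE => /andP[nxe xF1] lxy.
      have yF1 : y \in F1 by exact: fF1 lxy.
      rewrite yF1 andbT; apply/negP=> /imsetP[i iA eyi].
      have xD : x \in D.
        rewrite inE xF1 andbT; apply/negP=> xF2.
        by move: (eD i); rewrite -eyi inE (fF2 _ _ xF2 lxy).
      have := an x y xD; rewrite eyi => /(_ (eD i)); rewrite -eyi => /(_ lxy) exy.
      by move: nxe; rewrite exy eyi imset_f.
    * exact: subsetDl.
    * apply/subsetP=> x xF2; rewrite inE (subsetP s21) // andbT.
      apply/negP=> /imsetP[i _ exi]; by move: (eD i); rewrite -exi inE xF2.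
Qed.


Lemma anti_of_bi (T : finType) (le : rel T)
  (le_refl : reflexive le) (le_anti : antisymmetric le)
  (le_trans : transitive le) (F1 F2 : {set T}) k :
  F1 \in filters le -> F2 \in filters le -> F2 \subset F1 ->
  bool_interval (filters le) (@revsub T) k F1 F2 ->
  anti le (F1 :\: F2) && (#|F1 :\: F2| == k).
Proof.
move=> fF1 fF2 s21 /existsP[f /andP[/forallP iso /forallP cod]].
have isoP (A B : {set 'I_k}) : (A \subset B) = (f B \subset f A).
  by apply/eqP; exact: (forallP (iso A) B).
have codP z : [&& z \in filters le, z \subset F1 & F2 \subset z] = (z \in codom f).
  by rewrite andbA; apply/eqP; exact: (cod z).
have fin (A : {set 'I_k}) : [&& f A \in filters le, f A \subset F1 & F2 \subset f A].
  by rewrite codP codom_f.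
have finj : injective f.
  move=> A B eAB; apply/eqP; rewrite eqEsubset !isoP eAB subxx //.
have surj z : [&& z \in filters le, z \subset F1 & F2 \subset z] -> exists A, z = f A.
  by rewrite codP => /codomP.
have f0 : f set0 = F1.
  have [A eA] : exists A, F1 = f A by apply: surj; rewrite fF1 subxx s21.
  apply/eqP; rewrite eqEsubset; case/and3P: (fin set0) => _ -> _ /=.
  by rewrite eA -isoP sub0set.
have fT : f setT = F2.
  have [A eA] : exists A, F2 = f A by apply: surj; rewrite fF2 subxx s21.
  apply/eqP; rewrite eqEsubset; case/and3P: (fin setT) => _ _ -> /=.
  by rewrite andbT eA -isoP subsetT.
have fU (A B : {set 'I_k}) x : x \notin f (A :|: B) -> (x \notin f A) || (x \notin f B).
  have [C eC] : exists C, f A :&: f B = f C.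
    apply: surj; case/and3P: (fin A) => /filtersP fA sA1 s2A.
    case/and3P: (fin B) => /filtersP fB sB1 s2B.
    apply/and3P; split.
    - apply/filtersP=> y w; rewrite !inE => /andP[yA yB] lyw.
      by rewrite (fA _ _ yA lyw) (fB _ _ yB lyw).
    - exact: subset_trans (subsetIl _ _) sA1.
    - by rewrite subsetI s2A s2B.
  have sUC : A :|: B \subset C.
    by rewrite subUset !isoP -eC subsetIl subsetIr.
  rewrite isoP in sUC.
  move=> nx; rewrite -negb_and; apply/negP=> /andP[xA xB].
  by move/negP: nx; apply; apply: (subsetP sUC); rewrite -eC inE xA xB.
have P1 : forall (A : {set 'I_k}) x, x \in F1 -> x \notin f A -> exists2 i, i \in A & x \notin f [set i].
  move=> A; elim: {A}_.+1 {-2}A (ltnSn #|A|) => // n IH A ltA x xF1 nxA.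
  case: (set_0Vmem A) => [A0 | [i iA]].
    by move: nxA; rewrite A0 f0 xF1.
  have eA : A = [set i] :|: (A :\ i) by rewrite setD1K.
  move: nxA; rewrite {1}eA => /fU /orP[nxi | nxA'].
    by exists i.
  have ltA' : #|A :\ i| < n.
    by move: ltA; rewrite (cardsD1 i A) iA add1n ltnS.
  have [j jA' nxj] := IH (A :\ i) ltA' x xF1 nxA'.
  by exists j => //; move: jA'; rewrite inE => /andP[].
pose Xd d := [set y in F1 | le y d].
have XdF1 d : Xd d \subset F1 by apply/subsetP=> y; rewrite inE => /andP[].
have P2 d i : d \in F1 :\: F2 -> d \notin f [set i] -> f [set i] = F1 :\: Xd d.
  rewrite inE => /andP[dF2 dF1] ndi.
  have [A eA] : exists A, F1 :\: Xd d = f A.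
    apply: surj; apply/and3P; split.
    - have /filtersP fF1' := fF1.
      apply/filtersP=> x y; rewrite !inE => /andP[nxd xF1] lxy.
      rewrite (fF1' _ _ xF1 lxy) andbT; apply/negP=> /= lyd.
      by move: nxd; rewrite xF1 (le_trans _ _ _ lxy lyd).
    - exact: subsetDl.
    - apply/subsetP=> y yF2; rewrite !inE (subsetP s21) //= andbT.
      apply/negP=> lyd; have /filtersP fF2' := fF2.
      by move: dF2; rewrite (fF2' _ _ yF2 lyd).
  have sAi : A \subset [set i].
    rewrite isoP -eA; apply/subsetP=> y yi.
    case/and3P: (fin [set i]) => /filtersP fi si1 _.
    rewrite !inE (subsetP si1) // andbT; apply/negP=> lyd.
    by move: ndi; rewrite (fi _ _ yi lyd).
  have An0 : A != set0.
    apply/eqP=> A0; move: eA; rewrite A0 f0 => /setP/(_ d).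
    by rewrite !inE dF1 le_refl.
  have [j jA] := set0Pn _ An0.
  have ji : j = i by apply/set1P; exact: (subsetP sAi).
  have -> : [set i] = A.
    by apply/eqP; rewrite eqEsubset sAi andbT sub1set -ji.
  by rewrite -eA.
have P1' d : d \in F1 :\: F2 -> exists i, d \notin f [set i].
  rewrite inE => /andP[dF2 dF1].
  have nT : d \notin f setT by rewrite fT.
  have [i _ ?] := P1 setT d dF1 nT.
  by exists i.
have P3 i : exists2 d, d \in F1 :\: F2 & d \notin f [set i].
  case/and3P: (fin [set i]) => _ si1 s2i.
  have : f [set i] != F1.
    rewrite -f0; apply/negP=> /eqP /finj /setP /(_ i); by rewrite !inE eqxx.
  rewrite eqEsubset si1 /= => /subsetPn[d dF1 ndi].
  exists d => //; rewrite inE dF1 andbT; apply/negP=> dF2.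
  by move: ndi; rewrite (subsetP s2i).
have Xinj d d' : d \in F1 -> d' \in F1 -> F1 :\: Xd d = F1 :\: Xd d' -> d = d'.
  move=> dF1 d'F1 e.
  have H x y : x \in F1 -> F1 :\: Xd x = F1 :\: Xd y -> le x y.
    move=> xF1 /setP/(_ x); rewrite !inE xF1 le_refl /=.
    by case: (le x y).
  by apply: le_anti; rewrite (H _ _ dF1 e) (H _ _ d'F1 (esym e)).
apply/andP; split.
- apply/antiP=> d' d d'D dD ld'd.
  have [i ndi] := P1' d dD; have [j nd'j] := P1' d' d'D.
  have ei := P2 d i dD ndi; have ej := P2 d' j d'D nd'j.
  have sji : [set j] \subset [set i].
    rewrite isoP ei ej; apply: setDS; apply/subsetP=> y; rewrite !inE.
    by case/andP=> -> /= lyd'; exact: le_trans _ _ _ lyd' ld'd.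
  have ji : j = i by apply/set1P; rewrite -sub1set.
  apply: Xinj.
  + by move: d'D; rewrite inE => /andP[].
  + by move: dD; rewrite inE => /andP[].
  + by rewrite -ej -ei ji.
- pose h (i : 'I_k) := [pick d in F1 :\: F2 | d \notin f [set i]].
  have hP i : exists2 d, h i = Some d & (d \in F1 :\: F2) && (d \notin f [set i]).
    rewrite /h; case: pickP => [d Hd | H0]; first by exists d.
    have [d dD ndi] := P3 i.
    by move: (H0 d); rewrite dD ndi.
  have hinj : injective h.
    move=> i j eij.
    have [d hid /andP[dD ndi]] := hP i.
    have [d' hjd /andP[d'D nd'j]] := hP j.
    have dd' : d = d' by move: eij; rewrite hid hjd => -[].
    apply/set1P; rewrite -sub1set isoP.
    by rewrite (P2 d i dD ndi) (P2 d' j d'D nd'j) dd'.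
  have eimg : h @: setT = Some @: (F1 :\: F2).
    apply/setP=> o; apply/imsetP/imsetP.
    + case=> i _ ->; have [d -> /andP[dD _]] := hP i; by exists d.
    + case=> d dD ->.
      have [i ndi] := P1' d dD.
      have [d' hid' /andP[d'D nd'i]] := hP i.
      exists i => //; rewrite hid'; congr Some.
      apply: Xinj.
      * by move: dD; rewrite inE => /andP[].
      * by move: d'D; rewrite inE => /andP[].
      * by rewrite -(P2 d i dD ndi) (P2 d' i d'D nd'i).
  have := card_imset setT hinj; rewrite eimg (card_imset _ (@Some_inj _)).
  by rewrite cardsT card_ord => ->.
Qed.


Definition chainb (T : finType) (le : rel T) (C : {set {set T}}) : bool :=
  (C \subset filters le) && [forall A in C, forall B in C, (A \subset B) || (B \subset A)].

Lemma chainbP (T : finType) (le : rel T) C : reflect (is_chain le C) (chainb le C).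
Proof.
apply: (iffP andP) => [[sC H] | [sC H]]; split => //.
- move=> A B AC BC; move/forall_inP: H => /(_ A AC) /forall_inP; exact.
- by apply/forall_inP=> A AC; apply/forall_inP=> B BC; exact: H.
Qed.

Lemma cut_dich (T : finType) (le : rel T) a0 a1 :
  cutting le a0 a1 -> forall G, G \in filters le -> (G \subset a0) || (a1 \subset G).
Proof.
case=> fa0 fa1 s10 Hc G fG.
have P0 : chainb le [set G] && (G \in [set G]).
  rewrite set11 andbT; apply/andP; split; first by rewrite sub1set.
  by apply/forall_inP=> A /set1P ->; apply/forall_inP=> B /set1P ->; rewrite subxx.
case: (@arg_maxnP _ [set G] (fun C : {set {set T}} => chainb le C && (G \in C)) (fun C : {set {set T}} => #|C|) P0) => C /andP[chC GC] maxC.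
have mc : is_max_chain le C.
  split; first exact/chainbP.
  move=> D /chainbP chD sCD; apply/eqP; rewrite eq_sym eqEcard sCD /=.
  by apply: maxC; rewrite chD (subsetP sCD).
have [A [AC]] := Hc C mc.
rewrite inE => /andP[_ /andP[s1A sA0]].
case/andP: chC => _ /forall_inP/(_ A AC)/forall_inP/(_ G GC)/orP[sAG | sGA].
- by rewrite (subset_trans s1A sAG) orbT.
- by rewrite (subset_trans sGA sA0).
Qed.

Lemma S0P (T : finType) (le : rel T)
  (le_refl : reflexive le) (le_anti : antisymmetric le)
  (le_trans : transitive le) a0 :
  a0 \in filters le -> forall z, [exists s in S0 le a0, le z s] = (z \notin a0).
Proof.
move=> /filtersP fa0 z; apply/idP/idP.
- case/exists_inP=> s; rewrite inE => /andP[ns _] lzs.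
  by apply/negP=> za0; move: ns; rewrite (fa0 _ _ za0 lzs).
- move=> nz.
  have P0 : (z \notin a0) && le z z by rewrite nz le_refl.
  case: (@arg_maxnP _ z (fun t => (t \notin a0) && le z t) (fun t => #|[set u | le u t]|) P0) => s /andP[ns lzs] maxs.
  apply/exists_inP; exists s => //; rewrite inE ns /=.
  apply/forallP=> t; apply/implyP=> /andP[nt lst].
  have sub : [set u | le u s] \subset [set u | le u t].
    by apply/subsetP=> u; rewrite !inE => lus; exact: le_trans lus lst.
  have : [set u | le u s] == [set u | le u t].
    by rewrite eqEcard sub /=; apply: maxs; rewrite nt (le_trans _ _ _ lzs lst).
  move/eqP/setP/(_ t); rewrite !inE le_refl => lts.
  by apply/eqP; apply: le_anti; rewrite lts lst.
Qed.

Lemma S1P (T : finType) (le : rel T)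
  (le_refl : reflexive le) (le_anti : antisymmetric le)
  (le_trans : transitive le) a1 :
  a1 \in filters le -> forall y, [exists s in S1 le a1, le s y] = (y \in a1).
Proof.
move=> /filtersP fa1 y; apply/idP/idP.
- case/exists_inP=> s; rewrite inE => /andP[sa1 _] lsy.
  exact: fa1 sa1 lsy.
- move=> ya1.
  have P0 : (y \in a1) && le y y by rewrite ya1 le_refl.
  case: (@arg_minnP _ y (fun t => (t \in a1) && le t y) (fun t => #|[set u | le u t]|) P0) => s /andP[sa1 lsy] mins.
  apply/exists_inP; exists s => //; rewrite inE sa1 /=.
  apply/forallP=> t; apply/implyP=> /andP[ta1 lts].
  have sub : [set u | le u t] \subset [set u | le u s].
    by apply/subsetP=> u; rewrite !inE => lut; exact: le_trans lut lts.
  have : [set u | le u t] == [set u | le u s].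
    by rewrite eqEcard sub /=; apply: mins; rewrite ta1 (le_trans _ _ _ lts lsy).
  move/eqP/setP/(_ s); rewrite !inE le_refl => lst.
  by apply/eqP; apply: le_anti; rewrite lts lst.
Qed.


Lemma leK_SN (T : finType) (le : rel T)
  (le_refl : reflexive le) (le_anti : antisymmetric le)
  (le_trans : transitive le) a0 a1 :
  a0 \in filters le -> forall z, leK le a0 a1 (Some z) None = (z \notin a0).
Proof. move=> fa0 z; rewrite /leK; exact: S0P. Qed.

Lemma leK_NS (T : finType) (le : rel T)
  (le_refl : reflexive le) (le_anti : antisymmetric le)
  (le_trans : transitive le) a0 a1 :
  a1 \in filters le -> forall y, leK le a0 a1 None (Some y) = (y \in a1).
Proof. move=> fa1 y; rewrite /leK; exact: S1P. Qed.

Lemma cross_le (T : finType) (le : rel T)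
  (le_refl : reflexive le) (le_trans : transitive le) (a0 a1 : {set T}) :
  (forall G, G \in filters le -> (G \subset a0) || (a1 \subset G)) ->
  forall z y, z \notin a0 -> y \in a1 -> le z y.
Proof.
move=> dich z y nz ya1.
have fG : [set t | le z t] \in filters le.
  by apply/filtersP=> x w; rewrite !inE => lzx lxw; exact: le_trans lzx lxw.
case/orP: (dich _ fG) => [/subsetP/(_ z) | /subsetP/(_ y ya1)]; rewrite inE //.
by rewrite le_refl => /(_ isT) za0; move: nz; rewrite za0.
Qed.

Lemma leK_po (T : finType) (le : rel T)
  (le_refl : reflexive le) (le_anti : antisymmetric le)
  (le_trans : transitive le) a0 a1 :
  a0 \in filters le -> a1 \in filters le -> a1 \subset a0 ->
  (forall G, G \in filters le -> (G \subset a0) || (a1 \subset G)) ->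
  [/\ reflexive (leK le a0 a1), antisymmetric (leK le a0 a1) &
      transitive (leK le a0 a1)].
Proof.
move=> fa0 fa1 s10 dich.
have SN := leK_SN le_refl le_anti le_trans a1 fa0.
have NS := leK_NS le_refl le_anti le_trans a0 fa1.
have /filtersP fa0' := fa0.
split.
- by case=> [x|] //; exact: le_refl.
- case=> [x|] [y|] //.
  + by move=> H; congr Some; exact: le_anti.
  + rewrite SN NS => /andP[nx /(subsetP s10) xa0]; by move: nx; rewrite xa0.
  + rewrite SN NS => /andP[/(subsetP s10) ya0 ny]; by move: ny; rewrite ya0.
- case=> [y|] [x|] [z|] //.
  + exact: le_trans.
  + rewrite !SN => lxy ny; apply/negP=> xa0; by move: ny; rewrite (fa0' _ _ xa0 lxy).
  + have /filtersP fa1' := fa1; rewrite !NS => ya1 lyz; exact: fa1' _ _ ya1 lyz.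
  + rewrite SN NS => nx ya1; exact: cross_le dich _ _ nx ya1.
Qed.


Definition liftS (T : finType) (b : bool) (G : {set T}) : {set option T} :=
  [set o | if o is Some x then x \in G else b].
Definition unliftS (T : finType) (F : {set option T}) : {set T} := [set x | Some x \in F].

Lemma liftS_Some (T : finType) b (G : {set T}) x : (Some x \in liftS b G) = (x \in G).
Proof. by rewrite inE. Qed.
Lemma liftS_None (T : finType) b (G : {set T}) : (None \in liftS b G) = b.
Proof. by rewrite inE. Qed.

Lemma liftSK (T : finType) (F : {set option T}) : liftS (None \in F) (unliftS F) = F.
Proof. by apply/setP; case=> [x|]; rewrite !inE. Qed.

Lemma liftS_inj (T : finType) b1 b2 (G1 G2 : {set T}) :
  liftS b1 G1 = liftS b2 G2 -> b1 = b2 /\ G1 = G2.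
Proof.
move=> e; split; first by rewrite -(liftS_None b1 G1) e liftS_None.
by apply/setP=> x; rewrite -(liftS_Some b1) e liftS_Some.
Qed.

Lemma liftS_sub (T : finType) b1 b2 (G1 G2 : {set T}) :
  (liftS b2 G2 \subset liftS b1 G1) = (b2 ==> b1) && (G2 \subset G1).
Proof.
apply/idP/idP.
- move/subsetP=> H; apply/andP; split.
  + by apply/implyP=> b2t; have := H None; rewrite !liftS_None; apply.
  + by apply/subsetP=> x xG2; have := H (Some x); rewrite !liftS_Some; apply.
- case/andP=> /implyP hb /subsetP hs; apply/subsetP; case=> [x|].
  + by rewrite !liftS_Some; exact: hs.
  + by rewrite !liftS_None; exact: hb.
Qed.

Lemma liftS_diff (T : finType) b1 b2 (G1 G2 : {set T}) :
  liftS b1 G1 :\: liftS b2 G2 = liftS (b1 && ~~ b2) (G1 :\: G2).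
Proof. by apply/setP; case=> [x|]; rewrite !inE // andbC. Qed.

Lemma card_liftS (T : finType) b (G : {set T}) : #|liftS b G| = #|G| + b.
Proof.
rewrite (cardsD1 None) liftS_None addnC; congr (_ + _).
have -> : liftS b G :\ None = Some @: G.
  apply/setP; case=> [x|]; rewrite !inE /=.
  + by rewrite mem_imset //; exact: Some_inj.
  + by apply/esym/imsetP; case.
by rewrite card_imset //; exact: Some_inj.
Qed.

Lemma filter_liftS (T : finType) (le : rel T)
  (le_refl : reflexive le) (le_anti : antisymmetric le)
  (le_trans : transitive le) a0 a1 :
  a0 \in filters le -> a1 \in filters le -> forall b (G : {set T}),
  (liftS b G \in filters (leK le a0 a1)) =
    (G \in filters le) && (if b then a1 \subset G else G \subset a0).
Proof.
move=> fa0 fa1 b G.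
have SN := leK_SN le_refl le_anti le_trans a1 fa0.
have NS := leK_NS le_refl le_anti le_trans a0 fa1.
apply/idP/idP.
- move/filtersP=> H; apply/andP; split.
  + apply/filtersP=> x y xG lxy.
    by rewrite -(liftS_Some b); apply: (H (Some x)); rewrite ?liftS_Some.
  + case: b H => H.
    * apply/subsetP=> y ya1; rewrite -(liftS_Some true).
      by apply: (H None); rewrite ?liftS_None ?NS.
    * apply/subsetP=> x xG; apply/negPn/negP=> nx.
      have := H (Some x) None; rewrite liftS_Some liftS_None SN nx.
      by move=> /(_ xG isT).
- case/andP=> /filtersP fG hb; apply/filtersP; case=> [x|] [y|];
    rewrite ?liftS_Some ?liftS_None.
  + exact: fG.
  + rewrite SN; case: b hb => // sG0 xG nx.
    by move: nx; rewrite (subsetP sG0).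
  + rewrite NS => bt ya1; rewrite bt in hb; exact: (subsetP hb).
  + by [].
Qed.

Lemma anti_liftS (T : finType) (le : rel T)
  (le_refl : reflexive le) (le_anti : antisymmetric le)
  (le_trans : transitive le) a0 a1 :
  a0 \in filters le -> a1 \in filters le -> forall c (D : {set T}),
  anti (leK le a0 a1) (liftS c D) =
    anti le D && (c ==> (D \subset a0 :\: a1)).
Proof.
move=> fa0 fa1 c D.
have SN := leK_SN le_refl le_anti le_trans a1 fa0.
have NS := leK_NS le_refl le_anti le_trans a0 fa1.
apply/idP/idP.
- move/antiP=> H; apply/andP; split.
  + apply/antiP=> x y xD yD lxy.
    by have := H (Some x) (Some y); rewrite !liftS_Some => /(_ xD yD lxy) [].
  + apply/implyP=> ct; apply/subsetP=> d dD; rewrite inE.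
    apply/andP; split.
    * apply/negP=> da1.
      by have := H None (Some d); rewrite liftS_Some liftS_None NS ct da1 => /(_ isT dD isT).
    * apply/negPn/negP=> nd.
      by have := H (Some d) None; rewrite liftS_Some liftS_None SN ct nd => /(_ dD isT isT).
- case/andP=> /antiP H hc; apply/antiP; case=> [x|] [y|];
    rewrite ?liftS_Some ?liftS_None //.
  + by move=> xD yD lxy; congr Some; exact: H.
  + rewrite SN => xD ct; move/implyP: hc => /(_ ct) /subsetP /(_ x xD).
    by rewrite inE => /andP[_ ->].
  + rewrite NS => ct yD; move/implyP: hc => /(_ ct) /subsetP /(_ y yD).
    by rewrite inE => /andP[/negbTE ->].
Qed.


Definition goodb (T : finType) (le : rel T) k (p : {set T} * {set T}) : bool :=
  [&& p.1 \in filters le, p.2 \in filters le, p.2 \subset p.1,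
      anti le (p.1 :\: p.2) & #|p.1 :\: p.2| == k].

Lemma bi_iff (T : finType) (le : rel T)
  (le_refl : reflexive le) (le_anti : antisymmetric le)
  (le_trans : transitive le) (F1 F2 : {set T}) k :
  F1 \in filters le -> F2 \in filters le -> F2 \subset F1 ->
  bool_interval (filters le) (@revsub T) k F1 F2 =
  anti le (F1 :\: F2) && (#|F1 :\: F2| == k).
Proof.
move=> f1 f2 s; apply/idP/idP; first exact: anti_of_bi.
by case/andP=> an /eqP c; exact: bi_of_anti.
Qed.

Lemma qk_filters (T : finType) (le : rel T)
  (le_refl : reflexive le) (le_anti : antisymmetric le)
  (le_trans : transitive le) k :
  qk (filters le) (@revsub T) k = #|[set p | goodb le k p]|.
Proof.
rewrite /qk /goodb; apply: eq_card => p; rewrite [LHS]inE [RHS]inE /revsub.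
case f1: (p.1 \in filters le); case f2: (p.2 \in filters le);
  case s: (p.2 \subset p.1) => //=.
exact: bi_iff.
Qed.

Lemma bool_interval_eq (T : finType) (M M' : {set T}) (le : rel T) k x y :
  (forall z, le x z -> le z y -> (z \in M) = (z \in M')) ->
  bool_interval M le k x y = bool_interval M' le k x y.
Proof.
move=> H; rewrite /bool_interval; apply: eq_existsb => f; congr (_ && _).
apply: eq_forallb => z.
case lxz: (le x z); case lzy: (le z y); rewrite ?andbF ?andbT //.
by rewrite H.
Qed.

Lemma qk_cut (T : finType) (le : rel T)
  (le_refl : reflexive le) (le_anti : antisymmetric le)
  (le_trans : transitive le) (a0 a1 : {set T}) k :
  qk (cut_interval le a0 a1) (@revsub T) k =
  #|[set p | goodb le k p && (p.1 \subset a0) && (a1 \subset p.2)]|.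
Proof.
have cutP A : (A \in cut_interval le a0 a1) = [&& A \in filters le, a1 \subset A & A \subset a0].
  by rewrite [LHS]inE.
rewrite /qk /goodb; apply: eq_card => p; rewrite [LHS]inE [RHS]inE /revsub !cutP.
case f1: (p.1 \in filters le); case f2: (p.2 \in filters le);
  case s: (p.2 \subset p.1); rewrite ?andbF ?andbT //=.
case c1: (p.1 \subset a0); case c2: (a1 \subset p.2);
  rewrite ?andbF ?andbT //=.
- rewrite (subset_trans c2 s) (subset_trans s c1) /=.
  rewrite (@bool_interval_eq _ _ (filters le)); first exact: bi_iff.
  move=> z /= sz1 s2z; rewrite cutP (subset_trans c2 s2z) (subset_trans sz1 c1).
  by case: (z \in filters le).
Qed.

Lemma crossing (T : finType) (le : rel T) (a0 a1 : {set T}) k p :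
  a1 \subset a0 -> (forall G, G \in filters le -> (G \subset a0) || (a1 \subset G)) ->
  goodb le k p -> (p.1 \subset a0) || (a1 \subset p.2).
Proof.
case: p => G1 G2 s10 dich /and5P[/= /filtersP f1 fG2 s21 /antiP an _].
case c1: (G1 \subset a0) => //=; case c2: (a1 \subset G2) => //.
have sG2 : G2 \subset a0 by move: (dich _ fG2); rewrite c2 orbF.
have /filtersP f2 := fG2.
pose H := G2 :|: ((G1 :\: G2) :\: a0).
have fH : H \in filters le.
  apply/filtersP=> x y; rewrite !inE => /orP[xG2 | /andP[nxa0 /andP[nxG2 xG1]]] lxy.
  - by rewrite (f2 _ _ xG2 lxy).
  - case yG2: (y \in G2) => //=.
    have yG1 : y \in G1 by exact: f1 lxy.
    have exy : x = y by apply: an => //; rewrite inE ?nxG2 ?xG1 ?yG2 ?yG1.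
    by rewrite -exy nxa0 xG1.
case/orP: (dich _ fH).
- move/negbT: c1 => /subsetPn[x xG1 nxa0] /subsetP/(_ x).
  have nxG2 : x \notin G2 by apply/negP=> /(subsetP sG2); rewrite (negbTE nxa0).
  by rewrite !inE nxa0 nxG2 xG1 orbT => /(_ isT); rewrite (negbTE nxa0).
- move/negbT: c2 => /subsetPn[y ya1 nyG2] /subsetP/(_ y ya1).
  rewrite !inE (negbTE nyG2) /= => /andP[nya0 _].
  by move: nya0; rewrite (subsetP s10 _ ya1).
Qed.


Definition liftP (T : finType) b1 b2 (p : {set T} * {set T}) :=
  (liftS b1 p.1, liftS b2 p.2).

Lemma liftP_inj (T : finType) b1 b2 : injective (@liftP T b1 b2).
Proof.
case=> [G1 G2] [H1 H2]; rewrite /liftP /= => -[/liftS_inj[_ ->] /liftS_inj[_ ->]].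
by [].
Qed.

Lemma mem_liftP (T : finType) c1 c2 b1 b2 (p : {set T} * {set T}) (X : {set {set T} * {set T}}) :
  (liftP c1 c2 p \in liftP b1 b2 @: X) = [&& c1 == b1, c2 == b2 & p \in X].
Proof.
apply/imsetP/idP.
- case=> p' p'X; case: p p'X => G1 G2 p'X; case: p' p'X => H1 H2 p'X.
  rewrite /liftP /= => -[/liftS_inj[-> ->] /liftS_inj[-> ->]].
  by rewrite !eqxx p'X.
- by case/and3P=> /eqP -> /eqP -> pX; exists p.
Qed.

Lemma liftP_eta (T : finType) (q : {set option T} * {set option T}) :
  q = liftP (None \in q.1) (None \in q.2) (unliftS q.1, unliftS q.2).
Proof. by case: q => F1 F2; rewrite /liftP /= !liftSK. Qed.

Lemma liftP_disj (T : finType) b1 b2 c1 c2 (X Y : {set {set T} * {set T}}) :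
  (b1 != c1) || (b2 != c2) -> liftP b1 b2 @: X :&: liftP c1 c2 @: Y = set0.
Proof.
move=> nb; apply/setP=> q; rewrite inE in_set0.
apply/negP=> /andP[/imsetP[p _ ->]].
by rewrite mem_liftP => /and3P[/eqP e1 /eqP e2 _]; move: nb; rewrite e1 e2 !eqxx.
Qed.

Lemma cardsU0 (T : finType) (X Y : {set T}) : X :&: Y = set0 -> #|X :|: Y| = #|X| + #|Y|.
Proof. by move=> e; rewrite cardsU e cards0 subn0. Qed.

Lemma diag_card (T : finType) (M : {set {set T}}) (P : pred ({set T} * {set T})) :
  (forall p, P p = (p.1 \in M) && (p.1 == p.2)) -> #|[set p | P p]| = #|M|.
Proof.
move=> HP.
have -> : [set p | P p] = (fun G => (G, G)) @: M.
  apply/setP=> -[G1 G2]; rewrite inE HP /=; apply/andP/imsetP.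
  - by case=> GM /eqP <-; exists G1.
  - by case=> G GM [-> ->]; rewrite GM eqxx.
by rewrite card_imset // => G G' [].
Qed.

Lemma good0 (T : finType) (le : rel T) p :
  goodb le 0 p = (p.1 \in filters le) && (p.1 == p.2).
Proof.
case: p => G1 G2; rewrite /goodb /=; apply/idP/idP.
- case/and5P=> f1 f2 s _; rewrite cards_eq0 setD_eq0 => s'.
  by rewrite f1 eqEsubset s' s.
- case/andP=> f1 /eqP <-; rewrite f1 subxx setDv cards0 eqxx andbT /=.
  by apply/antiP=> x y; rewrite inE.
Qed.


Lemma goodLK (T : finType) (le : rel T)
  (le_refl : reflexive le) (le_anti : antisymmetric le)
  (le_trans : transitive le) a0 a1 :
  a0 \in filters le -> a1 \in filters le -> forall k b1 b2 p,
  goodb (leK le a0 a1) k (liftP b1 b2 p) =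
  if b1 then
    (if b2 then goodb le k p && (a1 \subset p.2)
     else [&& 0 < k, goodb le k.-1 p, p.1 \subset a0 & a1 \subset p.2])
  else (if b2 then false else goodb le k p && (p.1 \subset a0)).
Proof.
move=> fa0 fa1 k b1 b2 [G1 G2].
have FL := filter_liftS le_refl le_anti le_trans fa0 fa1.
have AL := anti_liftS le_refl le_anti le_trans fa0 fa1.
rewrite /goodb /liftP /= !FL liftS_sub liftS_diff AL card_liftS.
case: b1; case: b2 => /=.
- apply/idP/idP.
  + case/and5P=> /andP[f1 _] /andP[f2 c2] s /andP[an _]; rewrite addn0 => ck.
    by rewrite f1 f2 s an ck c2.
  + case/andP=> /and5P[f1 f2 s an ck] c2.
    by rewrite f1 f2 s an addn0 ck c2 (subset_trans c2 s).
- apply/idP/idP.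
  + case/and5P=> /andP[f1 c1] /andP[f2 c2] s /andP[an sD]; rewrite addn1 => /eqP ck.
    rewrite -ck /= f1 f2 s an eqxx /=.
    apply/andP; split.
    * apply/subsetP=> x xG1; case xG2: (x \in G2); first exact: (subsetP c2).
      have : x \in G1 :\: G2 by rewrite inE xG2 xG1.
      by move/(subsetP sD); rewrite inE => /andP[].
    * apply/subsetP=> y ya1; apply/negPn/negP=> nyG2.
      have : y \in G1 :\: G2 by rewrite inE nyG2 (subsetP c1).
      by move/(subsetP sD); rewrite inE ya1.
  + case/and4P=> k0 /and5P[f1 f2 s an /eqP ck] c1 c2.
    rewrite f1 f2 s an (subset_trans c2 s) (subset_trans s c1) /= addn1 ck prednK //.
    rewrite eqxx andbT; apply/subsetP=> d; rewrite !inE => /andP[ndG2 dG1].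
    rewrite (subsetP c1) // andbT; apply/negP=> da1.
    by move: ndG2; rewrite (subsetP c2).
- by rewrite !andbF.
- apply/idP/idP.
  + case/and5P=> /andP[f1 c1] /andP[f2 _] s /andP[an _]; rewrite addn0 => ck.
    by rewrite f1 f2 s an ck c1.
  + case/andP=> /and5P[f1 f2 s an ck] c1.
    by rewrite f1 f2 s an addn0 ck c1 (subset_trans s c1).
Qed.

Unset Implicit Arguments. Set Strict Implicit.

Theorem theorem4 (T : finType) (le : rel T)
  (le_refl : reflexive le) (le_anti : antisymmetric le)
  (le_trans : transitive le) (a0 a1 : {set T}) :
  cutting le a0 a1 ->
  (forall k : nat,
     qk (convex_expansion le a0 a1) (@revsub _) k =
       qk (filters le) (@revsub T) k
       + qk (cut_interval le a0 a1) (@revsub T) k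
       + qk_pred (cut_interval le a0 a1) (@revsub T) k) /\
  #|convex_expansion le a0 a1| = #|filters le| + #|cut_interval le a0 a1|.
Proof.
move=> cut; have [fa0 fa1 s10 _] := cut.
have dich := cut_dich cut.
have [Kr Ka Kt] := leK_po le_refl le_anti le_trans fa0 fa1 s10 dich.
have GL := goodLK le_refl le_anti le_trans fa0 fa1.
pose A k := [set p | goodb le k p && (p.1 \subset a0)].
pose B k := [set p | goodb le k p && (a1 \subset p.2)].
pose T3 k := [set p | [&& 0 < k, goodb le k.-1 p, p.1 \subset a0 & a1 \subset p.2]].
have SLK k : [set p | goodb (leK le a0 a1) k p] =
   liftP false false @: A k :|: liftP true true @: B k :|: liftP true false @: T3 k.
  apply/setP=> q; rewrite (liftP_eta q) inE GL !in_setU !mem_liftP.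
  by case: (None \in q.1); case: (None \in q.2); rewrite /= ?inE ?orbF.
have cLK k : qk (convex_expansion le a0 a1) (@revsub _) k = #|A k| + #|B k| + #|T3 k|.
  rewrite /convex_expansion (qk_filters Kr Ka Kt) SLK.
  rewrite cardsU0; last first.
    by rewrite setIUl !liftP_disj // setU0.
  rewrite cardsU0; last by rewrite liftP_disj.
  by rewrite !card_imset //; exact: liftP_inj.
have cL k : qk (filters le) (@revsub T) k = #|A k :|: B k|.
  rewrite (qk_filters le_refl le_anti le_trans); apply: eq_card => p.
  rewrite !inE; case g: (goodb le k p) => //=.
  by rewrite (crossing s10 dich g).
have cK k : qk (cut_interval le a0 a1) (@revsub T) k = #|A k :&: B k|.
  rewrite (qk_cut le_refl le_anti le_trans); apply: eq_card => p.
  by rewrite !inE; case: (goodb le k p).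
have cT k : #|T3 k| = qk_pred (cut_interval le a0 a1) (@revsub T) k.
  case: k => [|k] /=.
    by apply: eq_card0 => p; rewrite inE.
  by rewrite cK; apply: eq_card => p; rewrite !inE /=; case: (goodb le k p).
have main k : qk (convex_expansion le a0 a1) (@revsub _) k =
       qk (filters le) (@revsub T) k
       + qk (cut_interval le a0 a1) (@revsub T) k
       + qk_pred (cut_interval le a0 a1) (@revsub T) k.
  by rewrite cLK cL cK cardsUI cT.
split => //.
have := main 0; rewrite /= addn0.
rewrite /convex_expansion (qk_filters Kr Ka Kt) (qk_filters le_refl le_anti le_trans).
rewrite (qk_cut le_refl le_anti le_trans).
rewrite (@diag_card _ (filters (leK le a0 a1))); last by move=> p; rewrite good0.
rewrite (@diag_card _ (filters le)); last by move=> p; rewrite good0.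
rewrite (@diag_card _ (cut_interval le a0 a1)) //.
move=> p; rewrite good0; case: p => G1 G2 /=.
case e: (G1 == G2); rewrite ?andbF //; move/eqP: e => <-.
rewrite !inE.
by case: (upclosed le G1); case: (a1 \subset G1); case: (G1 \subset a0).
Qed.
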